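(* Let $\alpha = (\alpha_{rs})_{r,s=1}^k$ be a $k\times k$ doubly stochastic matrix and let $\beta = \frac{1}{k}\max_{\pi}\sum_{r=1}^k \alpha_{r,\pi(r)}$, where the maximum is over all permutations $\pi$ of $\{1,\dots,k\}$. Then \[ |\alpha|^2 := \sum_{r,s}\alpha_{rs}^2 \le k\beta . \]
   Context: A doubly stochastic matrix has nonnegative entries with every row sum and column sum equal to $1$. $|\alpha|$ denotes the Frobenius norm. *)

(* Defs.v *)
From mathcomp Require Import all_boot all_order all_algebra all_fingroup.
Set Implicit Arguments. Unset Strict Implicit. Unset Printing Implicit Defensive.
Import Order.TTheory GRing.Theory Num.Theory.
Local Open Scope ring_scope.

Definition doubly_stochastic (R : realFieldType) (k : nat) (A : 'M[R]_k) : Prop :=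
  (forall i j, 0 <= A i j) /\
  (forall i, \sum_j A i j = 1) /\
  (forall j, \sum_i A i j = 1).

(* beta = (1/k) max_pi sum_r A_{r, pi(r)}.  The max is over the nonempty set of
   permutations of nonnegative quantities, so taking it with neutral element 0 is exact. *)
Definition beta (R : realFieldType) (k : nat) (A : 'M[R]_k) : R :=
  k%:R^-1 * \big[Num.max/0]_(s : 'S_k) \sum_(r < k) A r (s r).

Definition frob2 (R : realFieldType) (k : nat) (A : 'M[R]_k) : R :=
  \sum_(r < k) \sum_(s < k) A r s ^+ 2.

(* Main.v *)
Require Import Defs.
From mathcomp Require Import all_boot all_order all_algebra all_fingroup.
Set Implicit Arguments. Unset Strict Implicit. Unset Printing Implicit Defensive.
Import Order.TTheory GRing.Theory Num.Theory.
Local Open Scope ring_scope.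
From mathcomp Require Import zify lra.
From Stdlib Require Import Lia.


Lemma kernel_exists (R : fieldType) m n (M : 'M[R]_(m,n)) :
  (\rank M < m)%N -> exists d : 'rV_m, exists i, d 0 i != 0 /\ d *m M = 0.
Proof.
move=> hr.
have hk : kermx M != 0.
  by rewrite -mxrank_eq0 mxrank_ker subn_eq0 -ltnNge.
have [[i j] hi] : exists p : 'I_m * 'I_m, kermx M p.1 p.2 != 0.
  apply/existsP; apply: contraR hk; rewrite negb_exists => /forallP h.
  apply/eqP/matrixP => i j; have := h (i, j); rewrite negbK /= => /eqP ->; by rewrite mxE.
exists (row i (kermx M)), j; split; first by rewrite mxE.
by rewrite -row_mul mulmx_ker row0.
Qed.

Lemma rank_sum_le (R : fieldType) (I : finType) (P : pred I) m n (F : I -> 'M[R]_(m,n)) :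
  (\rank (\sum_(i | P i) F i)%R <= \sum_(i | P i) \rank (F i))%N.
Proof.
apply: (big_ind2 (fun A k => \rank A <= k)%N) => //.
- by rewrite mxrank0.
- move=> A1 k1 A2 k2 h1 h2; apply: leq_trans (mxrank_add _ _) _; exact: leq_add.
Qed.

Lemma rank_diag_le (R : fieldType) n (w : 'rV[R]_n) :
  (\rank (diag_mx w) <= \sum_(j < n) (w 0 j != 0)%R)%N.
Proof.
rewrite diag_mx_sum_delta; apply: leq_trans (@rank_sum_le R _ predT _ _ (fun i => w 0 i *: delta_mx i i)) _.
apply: leq_sum => j _; have [->|nz] := eqP.
  by rewrite scale0r mxrank0.
rewrite mxrank_scale_nz; last exact/eqP. by rewrite mxrank_delta. Qed.
Lemma sum_pair_row (R : pzRingType) k (p : 'I_k * 'I_k) r :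
  \sum_(s < k) (p == (r, s))%:R = (p.1 == r)%:R :> R.
Proof.
case: p => a b /=; rewrite (bigD1 b) //= big1 => [|s hs].
  by rewrite xpair_eqE eqxx andbT addr0.
by rewrite xpair_eqE (eq_sym b) (negbTE hs) andbF.
Qed.

Lemma sum_pair_col (R : pzRingType) k (p : 'I_k * 'I_k) s :
  \sum_(r < k) (p == (r, s))%:R = (p.2 == s)%:R :> R.
Proof.
case: p => a b /=; rewrite (bigD1 a) //= big1 => [|r hr].
  by rewrite xpair_eqE eqxx addr0.
by rewrite xpair_eqE (eq_sym a) (negbTE hr).
Qed.

Lemma cycle_exists (R : fieldType) k (F : {set 'I_k * 'I_k}) :
 (forall r s, (r,s) \in F -> exists2 s', s' != s & (r,s') \in F) ->
 (forall r s, (r,s) \in F -> exists2 r', r' != r & (r',s) \in F) ->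
 F != set0 ->
 exists D : 'M[R]_k, D != 0 /\ (forall r s, D r s != 0 -> (r,s) \in F) /\
   (forall r, \sum_s D r s = 0) /\ (forall s, \sum_r D r s = 0).
Proof.
move=> hrow hcol /set0Pn [[r0 s0] p0F].
pose e (i : 'I_#|F|) := enum_val i.
have eF i : e i \in F by exact: enum_valP.
pose degr r := (\sum_(p | (p \in F) && (p.1 == r)) 1)%N.
pose degc s := (\sum_(p | (p \in F) && (p.2 == s)) 1)%N.
have hmr : #|F| = (\sum_r degr r)%N.
  by rewrite -sum1_card (partition_big (fun p => p.1) predT).
have hmc : #|F| = (\sum_s degc s)%N.
  by rewrite -sum1_card (partition_big (fun p => p.2) predT).
have dpr p : p \in F -> (0 < degr p.1)%N.
  by move=> pF; rewrite /degr (bigD1 p) ?pF ?eqxx.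
have dpc p : p \in F -> (0 < degc p.2)%N.
  by move=> pF; rewrite /degc (bigD1 p) ?pF ?eqxx.
have d2r r : (2 * (0 < degr r) <= degr r)%N.
  case: (posnP (degr r)) => [->//|hpos]; rewrite muln1.
  have [p /andP[pF /eqP pr]] : exists p, (p \in F) && (p.1 == r).
    apply/existsP; apply: contraLR hpos; rewrite negb_exists => /forallP h.
    rewrite -leqNgt leqn0; apply/eqP; rewrite /degr big1 // => q hq.
    by have := h q; rewrite hq.
  case: p pF pr => a b pF /= ar; subst a.
  have [s' s'b s'F] := hrow _ _ pF.
  rewrite /degr (bigD1 (r,b)) ?pF ?eqxx //= (bigD1 (r,s')) /= ?s'F ?eqxx ?xpair_eqE ?eqxx ?(negbTE s'b) //=.
have d2c s : (2 * (0 < degc s) <= degc s)%N.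
  case: (posnP (degc s)) => [->//|hpos]; rewrite muln1.
  have [p /andP[pF /eqP ps]] : exists p, (p \in F) && (p.2 == s).
    apply/existsP; apply: contraLR hpos; rewrite negb_exists => /forallP h.
    rewrite -leqNgt leqn0; apply/eqP; rewrite /degc big1 // => q hq.
    by have := h q; rewrite hq.
  case: p pF ps => a b pF /= bs; subst b.
  have [r' r'a r'F] := hcol _ _ pF.
  by rewrite /degc (bigD1 (a,s)) ?pF ?eqxx //= (bigD1 (r',s)) /= ?r'F ?eqxx ?xpair_eqE ?eqxx ?(negbTE r'a) //=.
have hA : (2 * \sum_r (0 < degr r) <= #|F|)%N.
  by rewrite hmr big_distrr /=; apply: leq_sum => r _.
have hB : (2 * \sum_s (0 < degc s) <= #|F|)%N.
  by rewrite hmc big_distrr /=; apply: leq_sum => r _.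
have hBs : ((\sum_s ((0 < degc s) && (s != s0))) + 1 = \sum_s (0 < degc s))%N.
  rewrite [in RHS](bigD1 s0) //= [in LHS](bigD1 s0) //= eqxx andbF add0n.
  rewrite (dpc (r0, s0) p0F) addnC; congr (_ + _)%N; apply: eq_bigr => s hs.
  by rewrite hs andbT.
pose Mr : 'M[R]_(#|F|, k) := \matrix_(i, r) ((e i).1 == r)%:R.
pose Mc : 'M[R]_(#|F|, k) := \matrix_(i, s) (((e i).2 == s) && (s != s0))%:R.
pose M := row_mx Mr Mc.
pose w : 'rV[R]_(k + k) :=
  row_mx (\row_r ((0 < degr r)%N)%:R) (\row_s (((0 < degc s)%N && (s != s0)))%:R).
have sl (l : 'I_k) : split (lshift k l) = inl l := unsplitK (inl _ l).
have sr (l : 'I_k) : split (rshift k l) = inr l := unsplitK (inr _ l).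
have hMw : M = M *m diag_mx w.
  apply/matrixP => i j; rewrite mul_mx_diag mxE.
  case: (split_ordP j) => l ->; rewrite !mxE ?sl ?sr !mxE.
    case: eqP => [<-|_]; last by rewrite mul0r.
    by rewrite dpr // mulr1.
  case: eqP => [<-|_]; last by rewrite mul0r.
  by rewrite dpc //=; case: ((e i).2 != s0); rewrite /= ?mulr1 ?mul0r.
have hrk : (\rank M < #|F|)%N.
  rewrite hMw; apply: leq_ltn_trans (mxrankM_maxr _ _) _.
  apply: leq_ltn_trans (rank_diag_le _) _.
  rewrite big_split_ord /=.
  have eb (b : bool) : ((b%:R : R) != 0) = b by case: b; rewrite ?oner_neq0 ?eqxx.
  have -> : (\sum_(i < k) (w 0%R (lshift k i) != 0%R) = \sum_r (0 < degr r))%N.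
    by apply: eq_bigr => r _; rewrite /w row_mxEl mxE eb.
  have -> : (\sum_(i < k) (w 0%R (rshift k i) != 0%R) = \sum_s ((0 < degc s) && (s != s0)))%N.
    by apply: eq_bigr => r _; rewrite /w row_mxEr mxE eb.
  move: hA hB hBs; set A := (\sum_r _)%N; set B := (\sum_s _)%N; set Bs := (\sum_s _)%N.
  clearbody A B Bs; move: #|F| => m h1 h2 h3. lia.
have [d [i0 [hd0 hdM]]] := kernel_exists hrk.
have := hdM; rewrite /M mul_mx_row -row_mx0 => /eq_row_mx [hr hc].
pose D : 'M[R]_k := \matrix_(r, s) \sum_i d 0 i * (e i == (r, s))%:R.
have rowD r : \sum_s D r s = 0.
  rewrite (eq_bigr (fun s => \sum_i d 0 i * (e i == (r, s))%:R)) => [|s _]; last by rewrite mxE.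
  rewrite exchange_big /=.
  transitivity ((d *m Mr) 0 r); last by rewrite hr mxE.
  rewrite mxE; apply: eq_bigr => i _; rewrite -mulr_sumr sum_pair_row mxE.
  done.
have colD' s : s != s0 -> \sum_r D r s = 0.
  move=> hs.
  rewrite (eq_bigr (fun r => \sum_i d 0 i * (e i == (r, s))%:R)) => [|r _]; last by rewrite mxE.
  rewrite exchange_big /=.
  transitivity ((d *m Mc) 0 s); last by rewrite hc mxE.
  rewrite mxE; apply: eq_bigr => i _; rewrite -mulr_sumr sum_pair_col mxE hs andbT.
  done.
have colD s : \sum_r D r s = 0.
  case: (eqVneq s s0) => [->|hs]; last exact: colD'.
  have : \sum_s \sum_r D r s = 0.
    by rewrite exchange_big /= big1 // => r _; exact: rowD.
  move=> h; rewrite -[RHS]h [RHS](bigD1 s0) //= [X in _ = _ + X]big1 ?addr0 // => s1 hs1; exact: colD'.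
have Dsupp r s : D r s != 0 -> (r, s) \in F.
  apply: contraR => hn; rewrite mxE big1 // => i _.
  case: eqP => [h|_]; last by rewrite mulr0.
  by move: (eF i); rewrite h (negbTE hn).
have Di0 : D (e i0).1 (e i0).2 = d 0 i0.
  rewrite mxE -surjective_pairing (bigD1 i0) //= eqxx mulr1 big1 ?addr0 // => i hi.
  by rewrite (inj_eq (@enum_val_inj _ _)) (negbTE hi) mulr0.
exists D; split; last by [].
by apply: contraNneq hd0 => hD; rewrite -Di0 hD mxE.
Qed.
Definition frac (R : realFieldType) k (Y : 'M[R]_k) : {set 'I_k * 'I_k} :=
  [set p | (0 < Y p.1 p.2) && (Y p.1 p.2 < 1)].

Definition dot (R : realFieldType) k (C Y : 'M[R]_k) : R :=
  \sum_(r < k) \sum_(s < k) C r s * Y r s.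

Lemma sum_two (R : realFieldType) (I : finType) (F : I -> R) i j :
  (forall x, 0 <= F x) -> i != j -> F i + F j <= \sum_x F x.
Proof.
move=> h ij; rewrite (bigD1 i) //= (bigD1 j) 1?eq_sym //= addrA lerDl.
by apply: sumr_ge0 => x _.
Qed.

Lemma ds_le1 (R : realFieldType) k (Y : 'M[R]_k) i j :
  doubly_stochastic Y -> Y i j <= 1.
Proof.
case=> h0 [hr _]; rewrite -(hr i) (bigD1 j) //= lerDl.
by apply: sumr_ge0 => x _.
Qed.

Lemma nonfrac (R : realFieldType) (y : R) :
  0 <= y -> y <= 1 -> ~~ ((0 < y) && (y < 1)) -> y = (y == 1)%:R.
Proof.
move=> h0 h1; case: eqP => [->//|/eqP hn].
rewrite (lt_neqAle y 1) hn h1 (lt_def 0 y) h0 !andbT negbK => /eqP ->.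
by [].
Qed.

Lemma sum_nonfrac (R : realFieldType) (I : finType) (P : pred I) (F : I -> R) :
  (forall x, P x -> F x = (F x == 1)%:R) ->
  exists n : nat, \sum_(x | P x) F x = n%:R.
Proof.
move=> h; exists (\sum_(x | P x) nat_of_bool (F x == 1%R))%N.
by rewrite natr_sum; apply: eq_bigr => x /h.
Qed.

Lemma frac_row (R : realFieldType) k (Y : 'M[R]_k) r s :
  doubly_stochastic Y -> (r, s) \in frac Y ->
  exists2 s', s' != s & (r, s') \in frac Y.
Proof.
move=> hY hrs.
case: (boolP [exists s', (s' != s) && ((r, s') \in frac Y)]).
  by case/existsP => s' /andP[h1 h2]; exists s'.
rewrite negb_exists => /forallP hn; exfalso.
have [n hn'] : exists n : nat, \sum_(s' | s' != s) Y r s' = n%:R.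
  apply: sum_nonfrac => s' hs'; apply: nonfrac; [by case: hY|exact: ds_le1|].
  by have := hn s'; rewrite hs' /= inE.
move: hrs; rewrite inE /= => /andP[h0 h1].
have := (proj1 (proj2 hY)) r; rewrite (bigD1 s) //= hn'.
case: n {hn'} => [|n]; first by rewrite addr0 => hh; move: h1; rewrite hh ltxx.
rewrite -natr1 => hh.
have : 0 <= (n%:R : R) by [].
lra.
Qed.

Lemma frac_col (R : realFieldType) k (Y : 'M[R]_k) r s :
  doubly_stochastic Y -> (r, s) \in frac Y ->
  exists2 r', r' != r & (r', s) \in frac Y.
Proof.
move=> hY hrs.
case: (boolP [exists r', (r' != r) && ((r', s) \in frac Y)]).
  by case/existsP => r' /andP[h1 h2]; exists r'.
rewrite negb_exists => /forallP hn; exfalso.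
have [n hn'] : exists n : nat, \sum_(r' | r' != r) Y r' s = n%:R.
  apply: sum_nonfrac => r' hr'; apply: nonfrac; [by case: hY|exact: ds_le1|].
  by have := hn r'; rewrite hr' /= inE.
move: hrs; rewrite inE /= => /andP[h0 h1].
have := (proj2 (proj2 hY)) s; rewrite (bigD1 r) //= hn'.
case: n {hn'} => [|n]; first by rewrite addr0 => hh; move: h1; rewrite hh ltxx.
rewrite -natr1 => hh.
have : 0 <= (n%:R : R) by [].
lra.
Qed.

Lemma integral_perm (R : realFieldType) k (Y : 'M[R]_k) :
  doubly_stochastic Y -> frac Y = set0 ->
  exists pi : 'S_k, forall r s, Y r s = (s == pi r)%:R.
Proof.
move=> hY h0.
have [hnn [hrow hcol]] := hY.
have ent r s : Y r s = (Y r s == 1)%:R.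
  apply: nonfrac; [exact: hnn|exact: ds_le1|].
  by move: (in_set0 (r, s)); rewrite -h0 inE /= => ->.
have ex r : exists s, Y r s == 1.
  apply/existsP; apply: contraT; rewrite negb_exists => /forallP hn.
  have : \sum_s Y r s = 0 by apply: big1 => s _; rewrite ent (negbTE (hn s)).
  by rewrite hrow => /eqP; rewrite oner_eq0.
have [f hf] := fin_all_exists ex.
have rowu r s : Y r s == 1 -> s = f r.
  move=> /eqP h1; apply/eqP; apply: contraT => hs.
  have := sum_two (hnn r) hs.
  by rewrite hrow h1 (eqP (hf r)); lra.
have finj : injective f.
  move=> r1 r2 he; apply/eqP; apply: contraT => hne.
  have := @sum_two R _ (fun r => Y r (f r1)) _ _ (fun x => hnn x _) hne.
  by rewrite hcol (eqP (hf r1)) he (eqP (hf r2)); lra.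
exists (perm finj) => r s; rewrite permE.
case: (eqVneq s (f r)) => [->|hs]; first by rewrite (eqP (hf r)) ?eqxx.
rewrite ent; case: eqP => // /eqP h1.
by move: hs; rewrite (rowu r s h1) eqxx.
Qed.

Lemma dot_perm (R : realFieldType) k (C Y : 'M[R]_k) (pi : 'S_k) :
  (forall r s, Y r s = (s == pi r)%:R) -> dot C Y = \sum_r C r (pi r).
Proof.
move=> h; apply: eq_bigr => r _.
rewrite (bigD1 (pi r)) //= h eqxx mulr1 big1 ?addr0 // => s hs.
by rewrite h (negbTE hs) mulr0.
Qed.

Lemma perturb (R : realFieldType) k (C Y D : 'M[R]_k) :
  doubly_stochastic Y -> D != 0 ->
  (forall r s, D r s != 0 -> (r, s) \in frac Y) ->
  (forall r, \sum_s D r s = 0) -> (forall s, \sum_r D r s = 0) ->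
  0 <= dot C D ->
  exists Y', [/\ doubly_stochastic Y', (#|frac Y'| < #|frac Y|)%N & dot C Y <= dot C Y'].
Proof.
move=> hY hD0 hsupp hDr hDc hCD.
have [hnn [hrow hcol]] := hY.
have [p0 hp0] : exists p : 'I_k * 'I_k, D p.1 p.2 != 0.
  apply/existsP; apply: contraR hD0; rewrite negb_exists => /forallP h.
  apply/eqP/matrixP => i j; rewrite mxE; apply/eqP; have := h (i, j); rewrite negbK.
  done.
pose g (p : 'I_k * 'I_k) : R :=
  if 0 < D p.1 p.2 then (1 - Y p.1 p.2) / D p.1 p.2 else Y p.1 p.2 / - D p.1 p.2.
pose q := Order.arg_min p0 (fun p => D p.1 p.2 != 0) g.
have [qS qmin] : D q.1 q.2 != 0 /\ forall p, D p.1 p.2 != 0 -> g q <= g p.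
  by rewrite /q; case: Order.TotalTheory.arg_minP => // x h1 h2; split.
have qF := hsupp _ _ qS.
move: (qF); rewrite inE /= => /andP[qY0 qY1].
pose eps := g q.
have eps0 : 0 < eps.
  rewrite /eps /g; case: ifP => hpos.
    by apply: divr_gt0 => //; rewrite subr_gt0.
  apply: divr_gt0 => //; rewrite oppr_gt0 lt_neqAle qS /=.
  by rewrite leNgt hpos.
pose Y' := Y + eps *: D.
have Y'E i j : Y' i j = Y i j + eps * D i j by rewrite !mxE.
exists Y'; split.
- split; [|split].
  + move=> i j; rewrite Y'E.
    case: (eqVneq (D i j) 0) => [->|hij]; first by rewrite mulr0 addr0.
    have := qmin (i, j) hij; rewrite /= -/eps /g /=.
    case: ifP => hpos.
      move=> _; have := hnn i j; have : 0 <= eps * D i j by apply: mulr_ge0; apply: ltW.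
      lra.
    have hneg : 0 < - D i j by rewrite oppr_gt0 lt_neqAle hij /= leNgt hpos.
    rewrite ler_pdivlMr //; lra.
  + move=> i; rewrite (eq_bigr (fun j => Y i j + eps * D i j)) => [|j _]; last exact: Y'E.
    by rewrite big_split /= -mulr_sumr hrow hDr mulr0 addr0.
  + move=> j; rewrite (eq_bigr (fun i => Y i j + eps * D i j)) => [|i _]; last exact: Y'E.
    by rewrite big_split /= -mulr_sumr hcol hDc mulr0 addr0.
- apply: proper_card; apply/properP; split.
    apply/subsetP => [[i j]] hij.
    case: (eqVneq (D i j) 0) => [h0|]; last exact: hsupp.
    by move: hij; rewrite !inE /= Y'E h0 mulr0 addr0.
  exists q; first by rewrite -surjective_pairing in qF.
  rewrite inE /= Y'E /eps /g; case: ifP => hpos.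
    by rewrite -mulrA mulVf // mulr1 addrC subrK ltxx andbF.
  by rewrite invrN mulrN mulNr -mulrA mulVf // mulr1 addrN ltxx.
have -> : dot C Y' = dot C Y + eps * dot C D.
  rewrite /dot mulr_sumr -big_split; apply: eq_bigr => i _.
  rewrite mulr_sumr -big_split; apply: eq_bigr => j _.
  by rewrite Y'E mulrDr mulrCA.
by rewrite lerDl; apply: mulr_ge0 => //; apply: ltW.
Qed.

Lemma dotN (R : realFieldType) k (C D : 'M[R]_k) : dot C (- D) = - dot C D.
Proof.
rewrite /dot -sumrN; apply: eq_bigr => i _; rewrite -sumrN; apply: eq_bigr => j _.
by rewrite mxE mulrN.
Qed.

Lemma birk (R : realFieldType) k (C : 'M[R]_k) n (Y : 'M[R]_k) :
  (#|frac Y| <= n)%N -> doubly_stochastic Y ->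
  exists pi : 'S_k, dot C Y <= \sum_r C r (pi r).
Proof.
elim: n Y => [|n IH] Y hn hY.
  have h0 : frac Y = set0 by apply/eqP; rewrite -cards_eq0 -leqn0.
  by have [pi hpi] := integral_perm hY h0; exists pi; rewrite (dot_perm C hpi).
case: (eqVneq (frac Y) set0) => [h0|hne].
  by have [pi hpi] := integral_perm hY h0; exists pi; rewrite (dot_perm C hpi).
have [D [hD0 [hs [hr hc]]]] :=
  @cycle_exists R k (frac Y) (fun r s h => frac_row hY h) (fun r s h => frac_col hY h) hne.
have fin Y' : doubly_stochastic Y' -> (#|frac Y'| < #|frac Y|)%N -> dot C Y <= dot C Y' ->
    exists pi : 'S_k, dot C Y <= \sum_r C r (pi r).
  move=> hY' hlt hle.
  have [|pi hpi] := IH Y' _ hY'; first by rewrite -ltnS (leq_trans hlt hn).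
  by exists pi; exact: le_trans hle hpi.
case: (lerP 0 (dot C D)) => hsg.
  have [Y' [hY' hlt hle]] := perturb hY hD0 hs hr hc hsg.
  exact: fin hY' hlt hle.
have h1 : - D != 0 by rewrite oppr_eq0.
have h2 r s : (- D) r s != 0 -> (r, s) \in frac Y by rewrite mxE oppr_eq0; exact: hs.
have h3 r : \sum_s (- D) r s = 0.
  by rewrite (eq_bigr (fun s => - D r s)) => [|s _]; rewrite ?mxE // sumrN hr oppr0.
have h4 s : \sum_r (- D) r s = 0.
  by rewrite (eq_bigr (fun r => - D r s)) => [|r _]; rewrite ?mxE // sumrN hc oppr0.
have h5 : 0 <= dot C (- D) by rewrite dotN oppr_ge0 ltW.
have [Y' [hY' hlt hle]] := perturb hY h1 h2 h3 h4 h5.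
exact: fin hY' hlt hle.
Qed.

Theorem mainTheorem4 (R : realFieldType) (k : nat) (A : 'M[R]_k) :
  doubly_stochastic A -> frob2 A <= k%:R * beta A.
Proof.
move=> hA.
have [pi hpi] := birk A (leqnn _) hA.
have hf : frob2 A = dot A A.
  by rewrite /frob2 /dot; apply: eq_bigr => r _; apply: eq_bigr => s _; rewrite expr2.
case: (posnP k) => [k0|kpos].
  have -> : k%:R = 0 :> R by rewrite k0.
  rewrite mul0r /frob2 big1 // => r _; by case: r => m hm; exfalso; move: hm; rewrite k0.
rewrite /beta mulrA mulfV ?mul1r; last by rewrite pnatr_eq0 -lt0n.
rewrite hf; apply: le_trans hpi _.
exact: Order.TotalTheory.le_bigmax.
Qed.
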